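(* Let $D$ be a set of pairwise intersecting closed disks in the plane. Let $D'$ be the set of disks obtained from $D$ by multiplying the radius of each disk by $2/\sqrt{3}$ while keeping its center. Then all disks in $D'$ have a common point. Moreover, the factor $2/\sqrt{3}$ is tight: for every $\lambda<2/\sqrt{3}$ there exists a set of pairwise intersecting closed disks such that the disks obtained by multiplying their radii by $\lambda$ (keeping centers) have no common point.
   Context: Two disks intersect if they have at least one common point (touching counts as intersecting). *)

(* Defs.v *)
From Stdlib Require Import Reals List.
Open Scope R_scope.

Definition dist2 (p q : R * R) : R :=
  sqrt ((fst p - fst q) ^ 2 + (snd p - snd q) ^ 2).

Record disk := mkDisk { center : R * R ; radius : R }.

Definition in_disk (p : R * R) (d : disk) : Prop := dist2 p (center d) <= radius d.

Definition disks_intersect (d1 d2 : disk) : Prop :=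
  exists p, in_disk p d1 /\ in_disk p d2.

Definition scale_disk (lam : R) (d : disk) : disk := mkDisk (center d) (lam * radius d).

Definition valid_disks (D : list disk) : Prop := forall d, In d D -> 0 < radius d.

Definition pairwise_intersecting (D : list disk) : Prop :=
  forall d1 d2, In d1 D -> In d2 D -> disks_intersect d1 d2.

Definition common_point (D : list disk) : Prop :=
  exists p, forall d, In d D -> in_disk p d.

(* Main.v *)
Require Import Defs.
From Stdlib Require Import Reals List Lra Psatz Classical ClassicalEpsilon.
Open Scope R_scope.

Definition sq (p q : R * R) : R := (fst p - fst q) ^ 2 + (snd p - snd q) ^ 2.
Definition g (d : disk) (p : R * R) : R := sq p (center d) / (radius d ^ 2).
Definition G (D : list disk) (p : R * R) : R :=
  fold_right (fun d acc => Rmax (g d p) acc) 0 D.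

Lemma G_ge0 D p : 0 <= G D p.
Proof. induction D; simpl. lra. apply Rle_trans with (1 := IHD). apply Rmax_r. Qed.

Lemma G_ge D p d : In d D -> g d p <= G D p.
Proof. induction D; simpl. tauto. intros [->|H]. apply Rmax_l.
  apply Rle_trans with (2 := Rmax_r _ _). auto. Qed.

Lemma G_lt D p mu : 0 < mu -> (forall d, In d D -> g d p < mu) -> G D p < mu.
Proof. induction D; simpl; intros. lra. apply Rmax_lub_lt; auto. Qed.

Lemma G_active D p : 0 < G D p -> exists d, In d D /\ g d p = G D p.
Proof. induction D; simpl; intros H. lra.
  change (fold_right (fun d acc => Rmax (g d p) acc) 0 D) with (G D p) in *.
  destruct (Rle_dec (g a p) (G D p)) as [h|h].
  rewrite Rmax_right in * by auto.
  destruct (IHD H) as [d [H1 H2]]. exists d; auto.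
  rewrite Rmax_left in * by lra.
  exists a; auto. Qed.

Lemma list_min {A} (P : A -> Prop) (h : A -> R) (L : list A) :
  (exists x, In x L /\ P x) ->
  exists z, In z L /\ P z /\ forall z', In z' L -> P z' -> h z <= h z'.
Proof.
  induction L as [|a L IH]; simpl. intros [x [[] _]].
  intros [x [Hx Px]].
  destruct (classic (exists x, In x L /\ P x)) as [Hex|Hno].
  - destruct (IH Hex) as [z [Hz [Pz Hmin]]].
    destruct (classic (P a /\ h a <= h z)) as [[Pa Ha]|Hna].
    + exists a. repeat split; auto. intros z' [<-|Hz'] Pz'. lra.
      apply Rle_trans with (1 := Ha). auto.
    + exists z. repeat split; auto. intros z' [Ha|Hz'] Pz'.
      subst z'. destruct (Rle_dec (h z) (h a)); auto. exfalso; apply Hna; split; auto; lra.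
      auto.
  - destruct Hx as [Hx|Hx]. 2:{ exfalso; apply Hno; eauto. }
    subst x. exists a. repeat split; auto. intros z' [Hz'|Hz'] Pz'. subst; lra.
    exfalso; apply Hno; eauto.
Qed.

Lemma uniform_t (D : list disk) (Q : disk -> R -> Prop) :
  (forall d, In d D -> exists t0, 0 < t0 /\ forall t, 0 < t <= t0 -> Q d t) ->
  exists t0, 0 < t0 /\ forall d, In d D -> forall t, 0 < t <= t0 -> Q d t.
Proof.
  induction D as [|a D IH]; simpl; intros H.
  - exists 1; split. lra. tauto.
  - destruct (H a (or_introl eq_refl)) as [t1 [Ht1 Q1]].
    destruct IH as [t2 [Ht2 Q2]]. intros; apply H; auto.
    exists (Rmin t1 t2). split. apply Rmin_pos; auto.
    intros d [<-|Hd] t Ht.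
    apply Q1. split. lra. apply Rle_trans with (Rmin t1 t2). lra. apply Rmin_l.
    apply Q2; auto. split. lra. apply Rle_trans with (Rmin t1 t2). lra. apply Rmin_r.
Qed.

Lemma Rabs_ge_both a : a <= Rabs a /\ - a <= Rabs a.
Proof. split. apply Rle_abs. rewrite <- Rabs_Ropp. apply Rle_abs. Qed.

Lemma Rmax_lip a b a' b' : Rabs (Rmax a b - Rmax a' b') <= Rabs (a - a') + Rabs (b - b').
Proof.
  destruct (Rabs_ge_both (a - a')). destruct (Rabs_ge_both (b - b')).
  apply Rabs_le. unfold Rmax.
  destruct (Rle_dec a b); destruct (Rle_dec a' b'); split; lra.
Qed.

Lemma quad_lip (x x' a r : R) : 0 < r -> Rabs (x' - x) <= 1 ->
  Rabs ((x' - a) ^ 2 / r ^ 2 - (x - a) ^ 2 / r ^ 2) <= (2 * Rabs (x - a) + 1) / r ^ 2 * Rabs (x' - x).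
Proof.
  intros Hr Hx.
  assert (E : (x' - a) ^ 2 / r ^ 2 - (x - a) ^ 2 / r ^ 2 = (x' - x) * ((x' - x) + 2 * (x - a)) * / r ^ 2)
    by (field; lra).
  rewrite E. rewrite !Rabs_mult. rewrite Rabs_inv. rewrite (Rabs_pos_eq (r ^ 2)) by (apply pow_le; lra).
  assert (Hi : 0 < / r ^ 2) by (apply Rinv_0_lt_compat; apply pow_lt; lra).
  assert (T : Rabs ((x' - x) + 2 * (x - a)) <= Rabs (x' - x) + 2 * Rabs (x - a)).
  { apply Rle_trans with (1 := Rabs_triang _ _). rewrite Rabs_mult, (Rabs_pos_eq 2) by lra. lra. }
  unfold Rdiv. assert (0 <= Rabs (x' - x)) by apply Rabs_pos.
  assert (V : Rabs ((x' - x) + 2 * (x - a)) <= 2 * Rabs (x - a) + 1) by lra.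
  assert (0 <= Rabs (x' - x) * / r ^ 2) by nra.
  replace (Rabs (x' - x) * Rabs (x' - x + 2 * (x - a)) * / r ^ 2) with
    (Rabs (x' - x + 2 * (x - a)) * (Rabs (x' - x) * / r ^ 2)) by ring.
  replace ((2 * Rabs (x - a) + 1) * / r ^ 2 * Rabs (x' - x)) with
    ((2 * Rabs (x - a) + 1) * (Rabs (x' - x) * / r ^ 2)) by ring.
  apply Rmult_le_compat_r; auto.
Qed.

Lemma g_lipx d x x' y : 0 < radius d -> Rabs (x' - x) <= 1 ->
  Rabs (g d (x', y) - g d (x, y)) <= (2 * Rabs (x - fst (center d)) + 1) / radius d ^ 2 * Rabs (x' - x).
Proof.
  intros. unfold g, sq; cbn [fst snd].
  replace (((x' - fst (center d)) ^ 2 + (y - snd (center d)) ^ 2) / radius d ^ 2 -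
    ((x - fst (center d)) ^ 2 + (y - snd (center d)) ^ 2) / radius d ^ 2)
   with ((x' - fst (center d)) ^ 2 / radius d ^ 2 - (x - fst (center d)) ^ 2 / radius d ^ 2)
   by (field; lra).
  apply quad_lip; auto.
Qed.

Lemma g_lipy d x y y' : 0 < radius d -> Rabs (y' - y) <= 1 ->
  Rabs (g d (x, y') - g d (x, y)) <= (2 * Rabs (y - snd (center d)) + 1) / radius d ^ 2 * Rabs (y' - y).
Proof.
  intros. unfold g, sq; cbn [fst snd].
  replace (((x - fst (center d)) ^ 2 + (y' - snd (center d)) ^ 2) / radius d ^ 2 -
    ((x - fst (center d)) ^ 2 + (y - snd (center d)) ^ 2) / radius d ^ 2)
   with ((y' - snd (center d)) ^ 2 / radius d ^ 2 - (y - snd (center d)) ^ 2 / radius d ^ 2)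
   by (field; lra).
  apply quad_lip; auto.
Qed.

Definition Kx (D : list disk) (x : R) :=
  fold_right (fun d acc => (2 * Rabs (x - fst (center d)) + 1) / radius d ^ 2 + acc) 0 D.
Definition Ky (D : list disk) (y : R) :=
  fold_right (fun d acc => (2 * Rabs (y - snd (center d)) + 1) / radius d ^ 2 + acc) 0 D.

Lemma G_lipx D x x' y : valid_disks D -> Rabs (x' - x) <= 1 ->
  Rabs (G D (x', y) - G D (x, y)) <= Kx D x * Rabs (x' - x).
Proof.
  intros HV Hx. induction D as [|d D IH]; simpl.
  - rewrite Rminus_diag, Rabs_R0. lra.
  - apply Rle_trans with (1 := Rmax_lip _ _ _ _).
    rewrite Rmult_plus_distr_r. apply Rplus_le_compat.
    apply g_lipx; auto. apply HV; simpl; auto.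
    apply IH. intros e He; apply HV; simpl; auto.
Qed.

Lemma G_lipy D x y y' : valid_disks D -> Rabs (y' - y) <= 1 ->
  Rabs (G D (x, y') - G D (x, y)) <= Ky D y * Rabs (y' - y).
Proof.
  intros HV Hy. induction D as [|d D IH]; simpl.
  - rewrite Rminus_diag, Rabs_R0. lra.
  - apply Rle_trans with (1 := Rmax_lip _ _ _ _).
    rewrite Rmult_plus_distr_r. apply Rplus_le_compat.
    apply g_lipy; auto. apply HV; simpl; auto.
    apply IH. intros e He; apply HV; simpl; auto.
Qed.

Lemma lip_cont (f : R -> R) x K :
  (forall y, Rabs (y - x) <= 1 -> Rabs (f y - f x) <= K * Rabs (y - x)) -> continuity_pt f x.
Proof.
  intros H. unfold continuity_pt, continue_in, limit1_in, limit_in. simpl. unfold R_dist.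
  intros eps Heps.
  assert (HK : 0 <= K).
  { specialize (H (x + 1)). replace (x + 1 - x) with 1 in H by ring.
    rewrite Rabs_R1 in H. assert (0 <= Rabs (f (x + 1) - f x)) by apply Rabs_pos. lra. }
  exists (Rmin 1 (eps / (K + 1))). split.
  apply Rmin_pos. lra. apply Rdiv_lt_0_compat; lra.
  intros y [_ Hy].
  assert (H1 : Rabs (y - x) <= 1) by (apply Rle_trans with (2 := Rmin_l 1 (eps / (K+1))); lra).
  assert (H2 : Rabs (y - x) < eps / (K + 1)) by (apply Rlt_le_trans with (2 := Rmin_r 1 (eps / (K+1))); lra).
  assert (H3 : (K + 1) * Rabs (y - x) < eps).
  { apply Rmult_lt_reg_r with (/ (K + 1)). apply Rinv_0_lt_compat; lra.
    replace ((K + 1) * Rabs (y - x) * / (K + 1)) with (Rabs (y - x)) by (field; lra). exact H2. }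
  specialize (H y H1). assert (0 <= Rabs (y - x)) by apply Rabs_pos. nra.
Qed.

Lemma far_bound (q c : R) (T M : R) : 1 <= T -> M = Rabs c + T -> ~ (-M <= q <= M) -> T <= (q - c) ^ 2.
Proof.
  intros HT HM Hq. destruct (Rabs_ge_both c).
  assert (q < -M \/ q > M) by (apply Classical_Prop.not_and_or in Hq; lra).
  nra.
Qed.

Lemma exists_min D : valid_disks D -> exists p, forall q, G D p <= G D q.
Proof.
  intros HV. destruct D as [|d0 D'] eqn:ED.
  - exists (0,0). intros q. simpl. lra.
  - rewrite <- ED in *.
    assert (Hr0 : 0 < radius d0) by (apply HV; rewrite ED; simpl; auto).
    set (c0 := center d0). set (r0 := radius d0).
    set (K0 := G D c0).
    set (T := K0 * r0 ^ 2 + 1).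
    assert (HK0 : 0 <= K0) by apply G_ge0.
    assert (HT : 1 <= T) by (unfold T; assert (0 <= K0 * r0 ^ 2) by (apply Rmult_le_pos; [lra|apply pow_le; unfold r0; lra]); lra).
    set (Mx := Rabs (fst c0) + T). set (My := Rabs (snd c0) + T).
    assert (HMx : 0 <= Mx) by (unfold Mx; assert (0 <= Rabs (fst c0)) by apply Rabs_pos; lra).
    assert (HMy : 0 <= My) by (unfold My; assert (0 <= Rabs (snd c0)) by apply Rabs_pos; lra).
    assert (H1 : forall x, exists y, -My <= y <= My /\ forall y', -My <= y' <= My -> G D (x, y) <= G D (x, y')).
    { intros x. destruct (continuity_ab_min (fun y => G D (x, y)) (-My) My) as [y [Hy1 Hy2]].
      lra. { intros c _. apply lip_cont with (K := Ky D c). intros y' Hy'. apply G_lipy; auto. }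
      exists y; split; auto. }
    set (ymin := fun x => proj1_sig (constructive_indefinite_description _ (H1 x))).
    assert (Hymin : forall x, -My <= ymin x <= My /\ forall y', -My <= y' <= My -> G D (x, ymin x) <= G D (x, y')).
    { intros x. unfold ymin. destruct (constructive_indefinite_description _ (H1 x)) as [y Hy]. simpl. exact Hy. }
    set (m := fun x => G D (x, ymin x)).
    assert (Hm : forall x x', Rabs (x' - x) <= 1 -> Rabs (m x' - m x) <= Kx D x * Rabs (x' - x)).
    { intros x x' Hx. unfold m.
      destruct (Hymin x) as [Ha Hb]. destruct (Hymin x') as [Ha' Hb'].
      assert (A1 := G_lipx D x x' (ymin x) HV Hx).
      assert (A2 := G_lipx D x x' (ymin x') HV Hx).
      assert (B1 := Hb' (ymin x) Ha). assert (B2 := Hb (ymin x') Ha').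
      destruct (Rabs_ge_both (G D (x', ymin x) - G D (x, ymin x))).
      destruct (Rabs_ge_both (G D (x', ymin x') - G D (x, ymin x'))).
      apply Rabs_le. split; lra. }
    destruct (continuity_ab_min m (-Mx) Mx) as [xs [Hxs1 Hxs2]]. lra.
    { intros c _. apply lip_cont with (K := Kx D c). intros y Hy. apply Hm; auto. }
    exists (xs, ymin xs).
    assert (Hbox : forall q, -Mx <= fst q <= Mx -> -My <= snd q <= My -> G D (xs, ymin xs) <= G D q).
    { intros [qx qy] Hqx Hqy. simpl in *. apply Rle_trans with (m qx). apply Hxs1; auto.
      unfold m. apply Hymin; auto. }
    intros [qx qy].
    destruct (classic (-Mx <= qx <= Mx /\ -My <= qy <= My)) as [[Hx Hy]|Hn].
    + apply Hbox; auto.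
    + apply Rle_trans with K0.
      * apply Hbox; destruct (Rabs_ge_both (fst c0)); destruct (Rabs_ge_both (snd c0)); unfold Mx, My; clear -H H0 H2 H3 HT; split; lra.
      * apply Rle_trans with (g d0 (qx, qy)). 2:{ apply G_ge. rewrite ED; simpl; auto. }
        unfold g, sq. cbn [fst snd]. fold c0. fold r0.
        assert (Hsq : T <= (qx - fst c0) ^ 2 + (qy - snd c0) ^ 2).
        { apply Classical_Prop.not_and_or in Hn. destruct Hn as [Hn|Hn].
          - assert (T <= (qx - fst c0) ^ 2) by (apply far_bound with Mx; auto).
            assert (0 <= (qy - snd c0) ^ 2) by apply pow2_ge_0. lra.
          - assert (T <= (qy - snd c0) ^ 2) by (apply far_bound with My; auto).
            assert (0 <= (qx - fst c0) ^ 2) by apply pow2_ge_0. lra. }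
        assert (Hr2 : 0 < r0 ^ 2) by (apply pow_lt; unfold r0; lra).
        apply Rmult_le_reg_r with (r0 ^ 2); auto.
        unfold Rdiv. rewrite Rmult_assoc, Rinv_l by lra. unfold T in Hsq. lra.
Qed.

Lemma small_t (e mu S V r : R) : 0 < r -> 0 <= V -> e <= mu -> (e = mu -> S < 0) ->
  exists t0, 0 < t0 /\ forall t, 0 < t <= t0 -> e + 2*t*S/r + t^2*V/r^2 < mu.
Proof.
  intros Hr HV He HS.
  assert (Hr2 : 0 < r ^ 2) by (apply pow_lt; lra).
  assert (Ediv : forall t, 2*t*S/r + t^2*V/r^2 = (2*t*S*r + t^2*V) / r^2) by (intros; field; lra).
  destruct (Req_dec e mu) as [Hem|Hem].
  - specialize (HS Hem). exists (-S*r/(V+1)). split.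
    + apply Rdiv_lt_0_compat; nra.
    + intros t [Ht1 Ht2].
      assert (Ht3 : t * (V + 1) <= - S * r).
      { apply Rmult_le_reg_r with (/ (V+1)). apply Rinv_0_lt_compat; lra.
        replace (t * (V + 1) * / (V + 1)) with t by (field; lra). exact Ht2. }
      assert (2*t*S*r + t^2*V < 0) by nra.
      assert ((2*t*S*r + t^2*V) / r^2 < 0).
      { apply Rdiv_neg_pos; auto. }
      rewrite Rplus_assoc, Ediv. lra.
  - assert (Hk : 0 <= 2 * Rabs S * r + V).
    { assert (0 <= Rabs S) by apply Rabs_pos. assert (0 <= 2 * Rabs S * r) by (apply Rmult_le_pos; lra). lra. }
    set (k := 2 * Rabs S * r + V) in *.
    exists (Rmin 1 ((mu - e) * r^2 / (k + 1))). split.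
    + apply Rmin_pos. lra. apply Rdiv_lt_0_compat; [apply Rmult_lt_0_compat; lra | lra].
    + intros t [Ht1 Ht2].
      assert (Ht3 : t <= 1) by (apply Rle_trans with (1 := Ht2); apply Rmin_l).
      assert (Ht4 : t <= (mu - e) * r^2 / (k + 1)) by (apply Rle_trans with (1 := Ht2); apply Rmin_r).
      assert (Ht5 : t * (k + 1) <= (mu - e) * r^2).
      { apply Rmult_le_reg_r with (/ (k+1)). apply Rinv_0_lt_compat; lra.
        replace (t * (k + 1) * / (k + 1)) with t by (field; lra).
        replace ((mu - e) * r^2 * / (k + 1)) with ((mu - e) * r^2 / (k + 1)) by (unfold Rdiv; ring). exact Ht4. }
      destruct (Rabs_ge_both S).
      assert (A0 : 0 <= (Rabs S - S) * (t * r)) by (apply Rmult_le_pos; [lra| apply Rmult_le_pos; lra]).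
      assert (A1 : 2*t*S*r <= 2*t*Rabs S*r) by nra.
      assert (A0' : 0 <= (t - t^2) * V) by (apply Rmult_le_pos; [nra| lra]).
      assert (A2 : t^2*V <= t*V) by nra.
      assert (A3 : 2*t*S*r + t^2*V < (mu - e) * r^2) by (unfold k in Ht5; nra).
      assert (A4 : (2*t*S*r + t^2*V) / r^2 < mu - e).
      { apply Rmult_lt_reg_r with (r^2); auto. unfold Rdiv. rewrite Rmult_assoc, Rinv_l by lra. lra. }
      rewrite Rplus_assoc, Ediv. lra.
Qed.

Lemma ident (a b c d x y : R) : a*c+b*d = 0 ->
  (x*x+y*y)*(a*a+b*b)*(c*c+d*d) = (x*a+y*b)^2*(c*c+d*d) + (x*c+y*d)^2*(a*a+b*b).
Proof. intros H.
  assert (E: (x*x+y*y)*(a*a+b*b)*(c*c+d*d) - ((x*a+y*b)^2*(c*c+d*d) + (x*c+y*d)^2*(a*a+b*b))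
     = -(a*c+b*d)*(2*(x*a+y*b)*(x*c+y*d)-(a*c+b*d)*(x*x+y*y))) by ring.
  rewrite H in E. lra. Qed.

Lemma step (X Y m mu : R) : 0 < mu -> m > -mu/2 -> X >= m -> Y >= m -> X + Y <= 0 ->
  4*mu*(mu*mu-m*m) = 2*(mu-m)*(X+Y)^2 + 2*(mu+m)*(X-Y)^2 -> False.
Proof. intros.
  assert (Hm: m <= 0) by lra.
  assert (H5: (X-Y)^2 <= (X+Y-2*m)^2) by nra.
  set (s := X+Y) in *.
  assert (Hs: 2*m <= s) by (unfold s; lra).
  assert (E: 2*(mu-m)*s^2 + 2*(mu+m)*(s-2*m)^2 = 4*mu*(s*(s-2*m)) - 8*m*m*s + 8*(mu+m)*m*m) by ring.
  assert (h1: s*(s-2*m) <= 0) by nra.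
  assert (h2: - 8*m*m*s <= -16*m*m*m) by nra.
  assert (h3: 0 < (mu+2*m)*(mu-m)) by nra.
  assert (h4: (X-Y)^2*(mu+m) <= (s-2*m)^2*(mu+m)) by nra.
  assert (m*m*(mu-m) < mu*(mu+m)*(mu-m)/2 + 0) by nra.
  nra. Qed.

Lemma gram (x1 y1 x2 y2 x3 y3 mu : R) :
  0 < mu -> x1*x1+y1*y1 = mu -> x2*x2+y2*y2 = mu -> x3*x3+y3*y3 = mu ->
  x1*x2+y1*y2 > - mu/2 ->
  x3*x1+y3*y1 >= x1*x2+y1*y2 -> x3*x2+y3*y2 >= x1*x2+y1*y2 ->
  x3*x1+y3*y1 + (x3*x2+y3*y2) > 0.
Proof.
  intros Hmu H1 H2 H3 Hm HX HY.
  destruct (Rlt_le_dec 0 (x3*x1+y3*y1 + (x3*x2+y3*y2))) as [h|h]. lra. exfalso.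
  assert (I := ident (x1+x2) (y1+y2) (x1-x2) (y1-y2) x3 y3).
  assert (Hort : (x1+x2)*(x1-x2)+(y1+y2)*(y1-y2) = 0) by nra.
  specialize (I Hort).
  apply (step (x3*x1+y3*y1) (x3*x2+y3*y2) (x1*x2+y1*y2) mu); auto.
  rewrite H3 in I.
  replace ((x1 + x2) * (x1 + x2) + (y1 + y2) * (y1 + y2)) with (2*mu + 2*(x1*x2+y1*y2)) in I by nra.
  replace ((x1 - x2) * (x1 - x2) + (y1 - y2) * (y1 - y2)) with (2*mu - 2*(x1*x2+y1*y2)) in I by nra.
  replace (x3 * (x1 + x2) + y3 * (y1 + y2)) with (x3*x1+y3*y1 + (x3*x2+y3*y2)) in I by ring.
  replace (x3 * (x1 - x2) + y3 * (y1 - y2)) with (x3*x1+y3*y1 - (x3*x2+y3*y2)) in I by ring.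
  nra.
Qed.

Lemma sq_ge0 p q : 0 <= sq p q.
Proof. unfold sq. assert (0 <= (fst p - fst q)^2) by apply pow2_ge_0.
  assert (0 <= (snd p - snd q)^2) by apply pow2_ge_0. lra. Qed.

Lemma inter_sq d1 d2 : disks_intersect d1 d2 ->
  sq (center d1) (center d2) <= (radius d1 + radius d2) ^ 2.
Proof.
  intros [q [H1 H2]]. unfold in_disk, dist2 in *.
  set (A := sqrt _) in H1. set (B := sqrt _) in H2.
  assert (HA : A * A = sq q (center d1)) by (apply sqrt_sqrt; apply sq_ge0).
  assert (HB : B * B = sq q (center d2)) by (apply sqrt_sqrt; apply sq_ge0).
  assert (HA0 : 0 <= A) by apply sqrt_pos. assert (HB0 : 0 <= B) by apply sqrt_pos.
  unfold sq in *.
  set (x1 := fst q - fst (center d1)) in *. set (x2 := snd q - snd (center d1)) in *.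
  set (y1 := fst q - fst (center d2)) in *. set (y2 := snd q - snd (center d2)) in *.
  replace ((fst (center d1) - fst (center d2)) ^ 2 + (snd (center d1) - snd (center d2)) ^ 2)
    with ((y1 - x1)^2 + (y2 - x2)^2) by (unfold x1, x2, y1, y2; ring).
  assert (CS : (x1*y1 + x2*y2)^2 <= (A*A)*(B*B)) by (rewrite HA, HB; assert (0 <= (x1*y2 - x2*y1)^2) by apply pow2_ge_0; nra).
  assert (HAB : 0 <= A*B) by (apply Rmult_le_pos; auto).
  assert (CS2 : -(x1*y1+x2*y2) <= A*B).
  { destruct (Rle_dec (-(x1*y1+x2*y2)) (A*B)) as [h|h]; auto. exfalso. set (s := x1*y1+x2*y2) in *. nra. }
  assert (A + B <= radius d1 + radius d2) by lra.
  nra.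
Qed.

Lemma in_scaled p d lam : 0 <= lam * radius d -> sq p (center d) <= (lam * radius d)^2 ->
  in_disk p (scale_disk lam d).
Proof.
  intros H1 H2. unfold in_disk, dist2, scale_disk; simpl.
  rewrite <- (sqrt_pow2 (lam * radius d)) by auto.
  apply sqrt_le_1_alt. exact H2.
Qed.

Definition wx (p : R * R) (d : disk) := (fst p - fst (center d)) / radius d.
Definition wy (p : R * R) (d : disk) := (snd p - snd (center d)) / radius d.
Definition N p a b := wx p a * wx p b + wy p a * wy p b.

Lemma g_w p d : 0 < radius d -> g d p = N p d d.
Proof. intros. unfold g, N, wx, wy, sq. field. lra. Qed.

Lemma g_move p d t vx vy : 0 < radius d ->
  g d (fst p + t * vx, snd p + t * vy) =
  g d p + 2 * t * (wx p d * vx + wy p d * vy) / radius d + t ^ 2 * (vx * vx + vy * vy) / radius d ^ 2.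
Proof. intros. unfold g, wx, wy, sq. cbn [fst snd]. field. lra. Qed.

Lemma part1 (D : list disk) : valid_disks D -> pairwise_intersecting D ->
  exists p, forall d, In d D -> g d p <= 4/3.
Proof.
  intros HV HP. destruct (exists_min D HV) as [p Hp]. exists p.
  set (mu := G D p).
  assert (Hmu : mu <= 4/3).
  { destruct (Rle_dec mu (4/3)) as [h|h]; auto. exfalso.
    assert (Hmu0 : 0 < mu) by lra.
    destruct (G_active D p Hmu0) as [d1 [Hd1 Ha1]].
    destruct (list_min (fun ab => g (fst ab) p = mu /\ g (snd ab) p = mu)
               (fun ab => N p (fst ab) (snd ab)) (list_prod D D)) as [[a b] [Hab [[Pa Pb] Hmin]]].
    { exists (d1, d1). split. apply in_prod; auto. simpl; auto. }
    simpl in Pa, Pb, Hmin.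
    apply in_prod_iff in Hab. destruct Hab as [Ha Hb].
    assert (Hra : 0 < radius a) by auto. assert (Hrb : 0 < radius b) by auto.
    destruct (Rle_dec (N p a b) (-mu/2)) as [Hn|Hn].
    - (* obtuse pair *)
      assert (I := inter_sq a b (HP a b Ha Hb)).
      rewrite g_w in Pa, Pb by auto.
      unfold N, wx, wy, sq in *.
      set (ra := radius a) in *. set (rb := radius b) in *.
      set (u1 := fst p - fst (center a)) in *. set (u2 := snd p - snd (center a)) in *.
      set (v1 := fst p - fst (center b)) in *. set (v2 := snd p - snd (center b)) in *.
      replace ((fst (center a) - fst (center b)) ^ 2 + (snd (center a) - snd (center b)) ^ 2)
        with ((v1 - u1)^2 + (v2 - u2)^2) in I by (unfold u1, u2, v1, v2; ring).
      assert (E1 : u1*u1 + u2*u2 = mu * ra^2).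
      { rewrite <- Pa. field. lra. }
      assert (E2 : v1*v1 + v2*v2 = mu * rb^2).
      { rewrite <- Pb. field. lra. }
      assert (E3 : u1*v1 + u2*v2 <= -mu/2 * (ra*rb)).
      { replace (u1*v1+u2*v2) with ((u1 / ra * (v1 / rb) + u2 / ra * (v2 / rb)) * (ra*rb)) by (field; lra).
        apply Rmult_le_compat_r. nra. exact Hn. }
      assert (mu * (ra^2 + rb^2 + ra*rb) <= (ra + rb)^2) by nra.
      assert ((ra - rb)^2 >= 0) by (apply Rle_ge; apply pow2_ge_0).
      apply Rnot_le_lt in h. assert (Q0 : 0 < ra^2 + rb^2 + ra*rb) by (assert (0 < ra*rb) by (apply Rmult_lt_0_compat; auto); assert (0 <= ra^2) by apply pow2_ge_0; assert (0 <= rb^2) by apply pow2_ge_0; lra).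
      assert (Q1 : 0 < (mu - 4/3) * (ra^2 + rb^2 + ra*rb)) by (apply Rmult_lt_0_compat; lra).
      nra.
    - (* descent *)
      set (vx := - (wx p a + wx p b)). set (vy := - (wy p a + wy p b)).
      destruct (uniform_t D (fun d t => g d (fst p + t * vx, snd p + t * vy) < mu)) as [t0 [Ht0 Hall]].
      { intros d Hd. assert (Hrd : 0 < radius d) by auto.
        destruct (small_t (g d p) mu (wx p d * vx + wy p d * vy) (vx*vx+vy*vy) (radius d)) as [t1 [Ht1 Hq]]; auto.
        - nra.
        - apply G_ge; auto.
        - intros Hact.
          assert (Hda : N p a b <= N p d a) by (apply (Hmin (d, a)); [apply in_prod; auto | simpl; auto]).
          assert (Hdb : N p a b <= N p d b) by (apply (Hmin (d, b)); [apply in_prod; auto | simpl; auto]).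
          rewrite g_w in Pa, Pb, Hact by auto.
          unfold N in *. unfold vx, vy.
          assert (Gr := gram (wx p a) (wy p a) (wx p b) (wy p b) (wx p d) (wy p d) mu Hmu0 Pa Pb Hact).
          assert (Gr' : wx p d * wx p a + wy p d * wy p a + (wx p d * wx p b + wy p d * wy p b) > 0)
            by (apply Gr; lra).
          nra.
        - exists t1. split; auto. intros t Ht. rewrite g_move by auto. apply Hq; auto. }
      assert (Hlt : G D (fst p + t0 * vx, snd p + t0 * vy) < mu).
      { apply G_lt; auto. intros d Hd. apply Hall; auto. lra. }
      specialize (Hp (fst p + t0 * vx, snd p + t0 * vy)). fold mu in Hp. lra. }
  intros d Hd. apply Rle_trans with mu; auto. apply G_ge; auto.
Qed.

Lemma in_disk_sq p d : 0 <= radius d -> sq p (center d) <= radius d ^ 2 -> in_disk p d.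
Proof.
  intros H1 H2. unfold in_disk, dist2.
  rewrite <- (sqrt_pow2 (radius d)) by auto.
  apply sqrt_le_1_alt. exact H2.
Qed.

Lemma sq_of_in_disk p d : in_disk p d -> 0 <= radius d /\ sq p (center d) <= radius d ^ 2.
Proof.
  unfold in_disk, dist2. intros H. change (sqrt (sq p (center d)) <= radius d) in H.
  assert (0 <= sqrt (sq p (center d))) by apply sqrt_pos.
  split. lra.
  rewrite <- (sqrt_sqrt (sq p (center d))) by apply sq_ge0.
  simpl. rewrite Rmult_1_r. apply Rmult_le_compat; auto.
Qed.

Lemma s3 : sqrt 3 * sqrt 3 = 3.
Proof. apply sqrt_sqrt. lra. Qed.

Lemma s3pos : 0 < sqrt 3.
Proof. apply sqrt_lt_R0. lra. Qed.

Lemma mid_inter c1 c2 : sq c1 c2 <= 4 -> disks_intersect (mkDisk c1 1) (mkDisk c2 1).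
Proof.
  intros H. exists ((fst c1 + fst c2)/2, (snd c1 + snd c2)/2).
  unfold sq in H. split; apply in_disk_sq; simpl; try lra; unfold sq; simpl; lra.
Qed.

Theorem theorem6 :
  (forall D : list disk,
      valid_disks D -> pairwise_intersecting D ->
      common_point (map (scale_disk (2 / sqrt 3)) D))
  /\
  (forall lam : R, lam < 2 / sqrt 3 ->
      exists D : list disk,
        valid_disks D /\ pairwise_intersecting D /\
        ~ common_point (map (scale_disk lam) D)).
Proof.
  assert (S3 := s3). assert (S3p := s3pos).
  split.
  - intros D HV HP. destruct (part1 D HV HP) as [p Hp]. exists p.
    intros d' Hd'. apply in_map_iff in Hd'. destruct Hd' as [d [<- Hd]].
    assert (Hr : 0 < radius d) by auto.
    specialize (Hp d Hd). unfold g in Hp.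
    assert (Hr2 : 0 < radius d ^ 2) by (apply pow_lt; lra).
    assert (Hsq : sq p (center d) <= 4/3 * radius d ^ 2).
    { apply Rmult_le_reg_r with (/ radius d ^ 2). apply Rinv_0_lt_compat; auto.
      replace (4/3 * radius d ^ 2 * / radius d ^ 2) with (4/3) by (field; lra). exact Hp. }
    apply in_scaled.
    + apply Rmult_le_pos; [apply Rlt_le, Rdiv_lt_0_compat|]; lra.
    + replace ((2 / sqrt 3 * radius d) ^ 2) with (4 / (sqrt 3 * sqrt 3) * radius d ^ 2) by (field; lra).
      rewrite S3. lra.
  - intros lam Hlam.
    exists (mkDisk (0,0) 1 :: mkDisk (2,0) 1 :: mkDisk (1, sqrt 3) 1 :: nil).
    split; [|split].
    + intros d Hd. simpl in Hd. destruct Hd as [<-|[<-|[<-|[]]]]; simpl; lra.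
    + intros d1 d2 H1 H2. simpl in H1, H2.
      destruct H1 as [<-|[<-|[<-|[]]]]; destruct H2 as [<-|[<-|[<-|[]]]];
        apply mid_inter; unfold sq; simpl; nra.
    + intros [p Hp].
      assert (A1 := sq_of_in_disk _ _ (Hp _ (or_introl eq_refl))).
      assert (A2 := sq_of_in_disk _ _ (Hp _ (or_intror (or_introl eq_refl)))).
      assert (A3 := sq_of_in_disk _ _ (Hp _ (or_intror (or_intror (or_introl eq_refl))))).
      unfold scale_disk in A1, A2, A3. cbn [center radius] in A1, A2, A3. unfold sq in A1, A2, A3. cbn [fst snd] in A1, A2, A3.
      destruct A1 as [L0 A1]. destruct A2 as [_ A2]. destruct A3 as [_ A3].
      assert (L1 : 0 <= lam) by (cbn [radius center scale_disk] in L0; lra).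
      assert (Hl2 : lam * lam * 3 < 4).
      { assert (lam * sqrt 3 < 2).
        { apply Rmult_lt_reg_r with (/ sqrt 3). apply Rinv_0_lt_compat; lra.
          replace (lam * sqrt 3 * / sqrt 3) with lam by (field; lra). exact Hlam. }
        nra. }
      destruct p as [x y]. cbn [fst snd] in *.
      set (s := sqrt 3) in *.
      assert (E : (x - 0) ^ 2 + (y - 0) ^ 2 + ((x - 2) ^ 2 + (y - 0) ^ 2) + ((x - 1) ^ 2 + (y - s) ^ 2)
        = 3 * (x - 1) ^ 2 + 3 * (y - s / 3) ^ 2 + 4) by (field_simplify; nra).
      assert (0 <= (x - 1) ^ 2) by apply pow2_ge_0. assert (0 <= (y - s / 3) ^ 2) by apply pow2_ge_0.
      assert (F : (lam * 1) ^ 2 = lam * lam) by ring.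
      rewrite F in A1, A2, A3. lra.
Qed.
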